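(* Let $\theta\in\mathbb{R}\setminus\mathbb{Q}$, $p_1,\ldots,p_k\in\mathbb{Z}\setminus\{0\}$ and $\xi_1,\ldots,\xi_k\in\mathbb{Q}\cap[0,1)$, and consider the system $\hat\theta_j=p_j\theta+\xi_j$, $1\le j\le k$. If there exist $1\le j'<j''\le k$ with $p_{j'}p_{j''}=-1$ and $\{\xi_{j'}+\xi_{j''}\}=0$, then this system is equivalent to the system $\hat\theta_j=p_j\theta+\xi_j$, $j\in\{1,\ldots,k\}\setminus\{j',j''\}$, i.e. the two systems have the same effective difference number.
   Context: For a system $\hat\theta_i=q_i\theta+\zeta_i$, $i\in I$ ($I$ finite), with $\theta$ irrational, $q_i\in\mathbb{Z}\setminus\{0\}$, $\zeta_i\in\mathbb{Q}\cap[0,1)$, and for $\eta\in\mathbb{Q}$, set $\eta(\zeta_i)=\{\zeta_i-q_i\eta\}$ (fractional part), $k_0^+(\eta)=\#\{i:\eta(\zeta_i)=0,q_i>0\}$, $k_0^-(\eta)=\#\{i:\eta(\zeta_i)=0,q_i<0\}$. The effective difference number of the system is $\max\{|k_0^+(\eta)-k_0^-(\eta)|:\eta\in\mathbb{Q}\}$ (with $k_0^\pm(\eta)=0$ for the empty system). Two such systems are called equivalent if their effective difference numbers coincide. *)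

(* Defs.v *)
From HB Require Import structures.
From mathcomp Require Import all_boot all_order all_algebra.
From mathcomp Require Import boolp reals.
Set Implicit Arguments. Unset Strict Implicit. Unset Printing Implicit Defensive.
Import Order.TTheory GRing.Theory Num.Theory.
Local Open Scope ring_scope.

(* A system  theta_hat_i = q_i theta + zeta_i  is encoded by the finite list of
   its coefficient pairs (q_i, zeta_i) : int * rat. *)
Definition system := seq (int * rat).

Definition fracpart (x : rat) : rat := x - (Num.floor x)%:~R.

Definition eta_zeta (eta : rat) (c : int * rat) : rat := fracpart (c.2 - c.1%:~R * eta).

Definition k0plus (s : system) (eta : rat) : nat :=
  count (fun c => (eta_zeta eta c == 0) && (0 < c.1)) s.
Definition k0minus (s : system) (eta : rat) : nat :=
  count (fun c => (eta_zeta eta c == 0) && (c.1 < 0)) s.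

Definition kdiff (s : system) (eta : rat) : nat :=
  `|(k0plus s eta)%:Z - (k0minus s eta)%:Z|%N.

(* effective difference number: max over eta in Q of kdiff s eta.
   Since 0 <= kdiff s eta <= size s, this is the max over the (finite) set of
   values attained, computed as a bounded max (empty system gives 0). *)
Definition edn (s : system) : nat :=
  \max_(n < (size s).+1 | `[< exists eta : rat, kdiff s eta = n >]) (n : nat).

Definition sys_of (k : nat) (p : 'I_k -> int) (xi : 'I_k -> rat)
  (J : pred 'I_k) : system :=
  [seq (p j, xi j) | j <- enum 'I_k & J j].

(* Main.v *)
Require Import Defs.
From HB Require Import structures.
From mathcomp Require Import all_boot all_order all_algebra.
From mathcomp Require Import boolp reals zify ring.
Import Order.TTheory GRing.Theory Num.Theory.
Local Open Scope ring_scope.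

Lemma pm1 (a b : int) : a * b = -1 -> (a = 1 /\ b = -1) \/ (a = -1 /\ b = 1).
Proof.
move=> h.
have : (`|a| * `|b| == 1)%N by rewrite -abszM h.
rewrite muln_eq1 => /andP [/eqP ha /eqP hb].
have [ea | ea] : a = 1 \/ a = -1 by lia.
  by left; split => //; rewrite -h ea mul1r.
right; split => //; rewrite ea mulN1r in h; exact: oppr_inj.
Qed.

Lemma frac0 (x : rat) : (fracpart x == 0) = (x \is a Num.int).
Proof. by rewrite /fracpart subr_eq0 intrEfloor eq_sym. Qed.

Lemma keyint (x y e : rat) : x + y \is a Num.int ->
  (x - e \is a Num.int) = (y + e \is a Num.int).
Proof.
move=> hxy; apply/idP/idP => h.
  have -> : y + e = (x + y) - (x - e) by ring.
  by rewrite rpredB.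
have -> : x - e = (x + y) - (y + e) by ring.
by rewrite rpredB.
Qed.

Lemma count_sys (k : nat) (p : 'I_k -> int) (xi : 'I_k -> rat) (J : pred 'I_k)
  (a : pred (int * rat)) :
  count a (sys_of p xi J) = (\sum_(j | J j) a (p j, xi j))%N.
Proof.
rewrite /sys_of count_map -sum1_count big_filter_cond big_enum_cond /=.
rewrite [RHS]big_mkcond [LHS]big_mkcond /=.
apply: eq_bigr => j _; rewrite andbC; by case: (J j); case: (a _).
Qed.

Lemma split2 (k : nat) (j1 j2 : 'I_k) (F : 'I_k -> nat) : j1 != j2 ->
  (\sum_(j | predT j) F j =
   \sum_(j | (j != j1) && (j != j2)) F j + F j1 + F j2)%N.
Proof.
move=> ne.
rewrite (bigD1 j1) //= (bigD1 j2) /=; last by rewrite eq_sym.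
lia.
Qed.

Lemma kdiff_le (s : system) eta : (kdiff s eta <= size s)%N.
Proof.
rewrite /kdiff /k0plus /k0minus.
have h1 := count_size (fun c => (eta_zeta eta c == 0) && (0 < c.1)) s.
have h2 := count_size (fun c => (eta_zeta eta c == 0) && (c.1 < 0)) s.
lia.
Qed.

Lemma edn_ext (s t : system) : (forall eta, kdiff s eta = kdiff t eta) ->
  (size t <= size s)%N -> edn s = edn t.
Proof.
move=> h le; rewrite /edn [RHS](big_ord_widen_cond (size s).+1 (fun n => `[< exists eta : rat, kdiff t eta = n >]) (fun x => x)) //.
apply: eq_bigl => n.
apply/idP/idP.
  move=> /asboolP [e He]; apply/andP; split. apply/asboolP. exists e. exact: (etrans (esym (h e)) He).
  have := kdiff_le t e; rewrite -h He; lia.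
by move=> /andP [/asboolP [e He] _]; apply/asboolP; exists e; rewrite h.
Qed.

Lemma introne : ((1 : int)%:~R : rat) = 1. Proof. by []. Qed.
Lemma intrmone : ((-1 : int)%:~R : rat) = -1. Proof. by rewrite mulrN1z. Qed.

Lemma cancel_pair (eta x1 x2 : rat) (q1 q2 : int) : q1 * q2 = -1 ->
  x1 + x2 \is a Num.int ->
  addn ((eta_zeta eta (q1, x1) == 0) && (0 < q1)) ((eta_zeta eta (q2, x2) == 0) && (0 < q2)) =
  addn ((eta_zeta eta (q1, x1) == 0) && (q1 < 0)) ((eta_zeta eta (q2, x2) == 0) && (q2 < 0)).
Proof.
move=> /pm1 [[-> ->]|[-> ->]] hi; rewrite /eta_zeta /= !frac0 /= ?introne ?intrmone
  ?mul1r ?mulN1r ?opprK /=.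
  by rewrite (keyint _ _ eta hi) !andbT !andbF addn0.
rewrite addrC in hi.
by rewrite (keyint _ _ eta hi) !andbT !andbF addn0 add0n.
Qed.

Theorem lemma4p3 (R : realType) (theta : R) (k : nat)
  (p : 'I_k -> int) (xi : 'I_k -> rat) (j1 j2 : 'I_k) :
  (forall q : rat, theta != ratr q) ->
  (forall j, p j != 0) ->
  (forall j, 0 <= xi j < 1) ->
  (j1 < j2)%N ->
  p j1 * p j2 = -1 ->
  fracpart (xi j1 + xi j2) = 0 ->
  edn (sys_of p xi predT) =
  edn (sys_of p xi (fun j => (j != j1) && (j != j2))).
Proof.
move=> _ _ _ lt12 hp hf.
have ne : j1 != j2 by rewrite neq_ltn lt12.
have hi : xi j1 + xi j2 \is a Num.int by rewrite -frac0 hf.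
apply: edn_ext; last first.
  rewrite /sys_of !size_map !size_filter; apply: leq_trans (count_size _ _) _; rewrite /enum_mem size_filter; exact: count_size.
move=> eta.
rewrite /kdiff /k0plus /k0minus !count_sys !(split2 _ _ _ _ ne) /=.
have := cancel_pair eta _ _ _ _ hp hi.
move=> e; rewrite -!addnA e !PoszD; congr (absz _); ring.
Qed.
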